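(* For every $k\ge1$, $n\ge0$ and nonnegative integers $m_1,\dots,m_k$, $$\mathcal D^{ss}_k(m_1,\dots,m_k;n)=N\Big(\sum_{i=1}^k m_i+k-1;\,n\Big).$$
   Context: A partition is a finite nonincreasing sequence $\lambda=(\lambda_1,\dots,\lambda_r)$ of positive integers (the empty partition is allowed); $l(\lambda)=r$, $|\lambda|=\sum_i\lambda_i$, $\lambda_1$ the largest part. For integers $m$ and $n\ge0$, $N(m;n)$ is the number of partitions $\lambda$ of $n$ with $\lambda_1-l(\lambda)=m$ (the empty partition of $0$ having rank $0$). Let $k\ge1$. A $k$-marked Durfee symbol of $n$ is an array $\eta=\begin{pmatrix}\alpha^k,&\dots,&\alpha^1\\ \beta^k,&\dots,&\beta^1\end{pmatrix}_D$ consisting of an integer $D\ge0$ and $2k$ partitions $\alpha^i,\beta^i$ with $\sum_{i=1}^k(|\alpha^i|+|\beta^i|)+D^2=n$, such that: (1) $\alpha^i$ is nonempty for $1\le i<k$; (2) for $1\le i<k$ every part of $\beta^i$ is $\le\alpha^i_1$, and for $2\le i\le k$ every part of $\alpha^i$ and every part of $\beta^i$ is $\ge\alpha^{i-1}_1$; (3) all parts of $\alpha^k$ and $\beta^k$ are $\le D$. The pair $(\alpha^i,\beta^i)$ is the $i$th vector. The $i$th rank is $\rho_i(\eta)=l(\alpha^i)-l(\beta^i)-1$ for $1\le i<k$ and $\rho_k(\eta)=l(\alpha^k)-l(\beta^k)$. A pair of partitions $(\alpha,\beta)$ is strict shifted if $l(\alpha)>l(\beta)$ and $\alpha_{i+1}>\beta_i$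 for $1\le i\le l(\beta)$. A $k$-marked Durfee symbol is strict shifted if each of its vectors $(\alpha^i,\beta^i)$ with $1\le i\le k-1$ is strict shifted. $\mathcal D^{ss}_k(m_1,\dots,m_k;n)$ denotes the number of $k$-marked strict shifted Durfee symbols of $n$ with $i$th rank $m_i$ for all $i$. *)

(* Defs.v *)
From mathcomp Require Import all_boot all_order all_algebra.
Set Implicit Arguments. Unset Strict Implicit. Unset Printing Implicit Defensive.
Import GRing.Theory Num.Theory.

Definition is_partition (s : seq nat) : bool :=
  sorted geq s && all (fun x => 0 < x) s.

Definition largest (s : seq nat) : nat := head 0 s.

Definition prank (s : seq nat) : int := (Posz (largest s) - Posz (size s))%R.

Fixpoint seqs_len (T : Type) (l : nat) (vals : seq T) : seq (seq T) :=
  match l with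
  | 0 => [:: [::]]
  | l'.+1 => [seq x :: s | x <- vals, s <- seqs_len l' vals]
  end.

(* All sequences of length <= n with entries in 1..n : every partition of
   any j <= n occurs in this list exactly once. *)
Definition bseqs (n : nat) : seq (seq nat) :=
  flatten [seq seqs_len l (iota 1 n) | l <- iota 0 n.+1].

Definition Nrank (m : int) (n : nat) : nat :=
  count (fun s => [&& is_partition s, sumn s == n & prank s == m]) (bseqs n).

(* A k-marked Durfee symbol is represented by (D, al, be) where al, be are
   sequences of length k and the i-th vector (alpha^i, beta^i), 1 <= i <= k,
   is (nth [::] al (i-1), nth [::] be (i-1)). *)
Definition is_kmds (k n D : nat) (al be : seq (seq nat)) : bool :=
  [&& size al == k, size be == k,
      all is_partition al, all is_partition be,
      sumn (map sumn al) + sumn (map sumn be) + D ^ 2 == n,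
      (* (1) and first half of (2): for 1 <= i < k *)
      all (fun i => (i.+1 < k) ==>
         ((nth [::] al i != [::]) &&
          all (fun b => b <= largest (nth [::] al i)) (nth [::] be i))) (iota 0 k),
      (* second half of (2): for 2 <= i <= k (0-indexed i >= 1) *)
      all (fun i => (0 < i) ==>
         (all (fun a => largest (nth [::] al i.-1) <= a) (nth [::] al i) &&
          all (fun b => largest (nth [::] al i.-1) <= b) (nth [::] be i))) (iota 0 k)
    & (* (3), read as in Andrews' definition: every part of every
         alpha^i, beta^i is <= D *)
      all (all (fun a => a <= D)) al &&
      all (all (fun b => b <= D)) be].

(* i-th rank, with 0-indexed i (i.e. rho_{i+1}) *)
Definition kmds_rank (k : nat) (al be : seq (seq nat)) (i : nat) : int :=
  if i.+1 < k then
    (Posz (size (nth [::] al i)) - Posz (size (nth [::] be i)) - 1)%R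
  else (Posz (size (nth [::] al i)) - Posz (size (nth [::] be i)))%R.

Definition strict_shifted (a b : seq nat) : bool :=
  (size b < size a) &&
  all (fun j => nth 0 b j < nth 0 a j.+1) (iota 0 (size b)).

Definition is_ss_kmds (k n D : nat) (al be : seq (seq nat)) : bool :=
  is_kmds k n D al be &&
  all (fun i => (i.+1 < k) ==> strict_shifted (nth [::] al i) (nth [::] be i)) (iota 0 k).

(* D^ss_k(m_1,...,m_k; n), with m_i = nth 0 m (i-1).  All parts of a
   Durfee symbol of n are <= n, all partitions have length <= n and D <= n,
   so the candidates below cover every symbol, each exactly once. *)
Definition Dss (k : nat) (m : seq nat) (n : nat) : nat :=
  count (fun t : nat * (seq (seq nat) * seq (seq nat)) =>
           let: (D, (al, be)) := t in
           is_ss_kmds k n D al be &&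
           all (fun i => kmds_rank k al be i == Posz (nth 0 m i)) (iota 0 k))
    [seq (D, p) | D <- iota 0 n.+1,
                  p <- [seq (al, be) | al <- seqs_len k (bseqs n),
                                       be <- seqs_len k (bseqs n)]].

(* Main.v *)
Require Import Defs.
From mathcomp Require Import all_boot all_order all_algebra.
Import GRing.Theory Num.Theory.
Set Implicit Arguments. Unset Strict Implicit. Unset Printing Implicit Defensive.

Lemma count_bij (T1 T2 : eqType) (P1 : pred T1) (P2 : pred T2) s1 s2
  (f : T1 -> T2) (g : T2 -> T1) :
  uniq s1 -> uniq s2 -> (forall x, P1 x -> x \in s1) -> (forall y, P2 y -> y \in s2) ->
  (forall x, P1 x -> P2 (f x) /\ g (f x) = x) ->
  (forall y, P2 y -> P1 (g y) /\ f (g y) = y) ->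
  count P1 s1 = count P2 s2.
Proof.
move=> u1 u2 c1 c2 fg gf; rewrite -!size_filter.
have pe : perm_eq (map f (filter P1 s1)) (filter P2 s2).
  apply: uniq_perm.
  - rewrite map_inj_in_uniq ?filter_uniq //.
    move=> x y; rewrite !mem_filter => /andP[Px _] /andP[Py _] e.
    by rewrite -(fg x Px).2 e (fg y Py).2.
  - by rewrite filter_uniq.
  move=> y; apply/mapP/idP.
  - case=> x; rewrite mem_filter => /andP[Px _] ->.
    by rewrite mem_filter (fg x Px).1 c2 // (fg x Px).1.
  - rewrite mem_filter => /andP[Py _]; exists (g y); last by rewrite (gf y Py).2.
    by rewrite mem_filter (gf y Py).1 c1 // (gf y Py).1.
by rewrite -(perm_size pe) size_map.
Qed.

Lemma mem_seqs_len (T : eqType) l (vals : seq T) s :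
  (s \in seqs_len l vals) = (size s == l) && all (mem vals) s.
Proof.
elim: l s => [|l IH] [|x s] //=.
- by apply/allpairsP => -[[y t] [_ _ //]].
- apply/allpairsP/idP.
  + case=> -[y t] [/= Hy Ht [-> ->]]; move: Ht; rewrite IH eqSS => /andP[-> ->].
    by rewrite Hy.
  + rewrite eqSS => /andP[Hs /andP[Hx Ha]]; exists (x, s); split => //.
    by rewrite IH Hs Ha.
Qed.

Lemma uniq_seqs_len (T : eqType) l (vals : seq T) : uniq vals -> uniq (seqs_len l vals).
Proof.
move=> uv; elim: l => [|l IH] //=.
apply: allpairs_uniq => //; by move=> [x1 s1] [x2 s2] _ _ /= [-> ->].
Qed.

Lemma uniq_flat_seqs (s : seq nat) (vals : seq nat) : uniq s -> uniq vals ->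
  uniq (flatten [seq seqs_len l vals | l <- s]).
Proof.
move=> us uv; elim: s us => [|a s IH] //= /andP[nas us].
rewrite cat_uniq uniq_seqs_len // IH // andbT.
apply/hasPn => y /flatten_mapP [l Hl]; rewrite !mem_seqs_len => /andP[/eqP sl _].
apply/negP => /andP[/eqP e _]; by move: nas; rewrite -e sl Hl.
Qed.

Lemma mem_bseqs n s : (s \in bseqs n) = (size s <= n) && all (fun x => 0 < x <= n) s.
Proof.
apply/flatten_mapP/idP.
- case=> l; rewrite mem_iota add0n ltnS => /andP[_ Hl]; rewrite mem_seqs_len => /andP[/eqP -> Ha].
  rewrite Hl /=; apply/allP => x Hx; move: (allP Ha x Hx) => /=; by rewrite mem_iota add1n ltnS.
- move=> /andP[Hs Ha]; exists (size s); first by rewrite mem_iota add0n ltnS.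
  rewrite mem_seqs_len eqxx /=; apply/allP => x Hx; move: (allP Ha x Hx) => /=.
  by rewrite mem_iota add1n ltnS.
Qed.

Lemma uniq_bseqs n : uniq (bseqs n).
Proof. by apply: uniq_flat_seqs; apply: iota_uniq. Qed.

Require Import Defs.
From mathcomp Require Import all_boot all_order all_algebra.
Import GRing.Theory Num.Theory.
Set Implicit Arguments. Unset Strict Implicit. Unset Printing Implicit Defensive.

Fixpoint good (c D : nat) (vs : seq (seq nat * seq nat)) (ms : seq nat) : bool :=
  match vs, ms with
  | (a, b) :: vs', m :: ms' =>
    [&& is_partition a, is_partition b,
        all (fun x => c <= x) a, all (fun x => c <= x) b,
        all (fun x => x <= D) a, all (fun x => x <= D) b &
        if vs' is [::] then (ms' == [::]) && (size a == size b + m)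
        else [&& a != [::], all (fun x => x <= largest a) b, strict_shifted a b,
                 size a == size b + m + 1 & good (largest a) D vs' ms']]
  | _, _ => false
  end.

Fixpoint goodpre (c D : nat) (vs : seq (seq nat * seq nat)) (ms : seq nat) : bool :=
  match vs, ms with
  | [::], [::] => true
  | (a, b) :: vs', m :: ms' =>
    [&& is_partition a, is_partition b,
        all (fun x => c <= x) a, all (fun x => c <= x) b,
        all (fun x => x <= D) a, all (fun x => x <= D) b &
        [&& a != [::], all (fun x => x <= largest a) b, strict_shifted a b,
                 size a == size b + m + 1 & goodpre (largest a) D vs' ms']]
  | _, _ => false
  end.

Fixpoint thr (c : nat) (vs : seq (seq nat * seq nat)) : nat :=
  match vs with [::] => c | (a, _) :: vs' => thr (largest a) vs' end.

Lemma good_cat c D vs ms X Y : size vs = size ms -> X != [::] ->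
  good c D (vs ++ X) (ms ++ Y) = goodpre c D vs ms && good (thr c vs) D X Y.
Proof.
elim: vs c ms => [|[a b] vs IH] c [|m ms] //= [Hs] HX.
case E: (vs ++ X) => [|y z].
  by clear IH; move: (congr1 size E); rewrite size_cat; case: X HX E => //= x X' _ _; rewrite addnS.
by rewrite -E IH // -!andbA.
Qed.

Definition thrc c (al : seq (seq nat)) i := if i is j.+1 then largest (nth [::] al j) else c.

Lemma all_iotaS (P : pred nat) k : all P (iota 0 k.+1) = P 0 && all (fun i => P i.+1) (iota 0 k).
Proof. by rewrite /= (iotaDl 1 0) all_map. Qed.

Lemma rk1 x y m : ((Posz x - Posz y - 1)%R == Posz m) = (x == y + m + 1).
Proof. by rewrite !subr_eq -!PoszD eqz_nat addnC addnA. Qed.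

Lemma rk0 x y m : ((Posz x - Posz y)%R == Posz m) = (x == y + m).
Proof. by rewrite !subr_eq -!PoszD eqz_nat addnC. Qed.


Definition KC c D al be m :=
  let k := size al in
  [&& all is_partition al, all is_partition be,
      all (fun i => (i.+1 < k) ==> ((nth [::] al i != [::]) && all (fun b => b <= largest (nth [::] al i)) (nth [::] be i))) (iota 0 k),
      all (fun i => all (fun a => thrc c al i <= a) (nth [::] al i) && all (fun b => thrc c al i <= b) (nth [::] be i)) (iota 0 k),
      all (all (fun a => a <= D)) al, all (all (fun b => b <= D)) be,
      all (fun i => (i.+1 < k) ==> strict_shifted (nth [::] al i) (nth [::] be i)) (iota 0 k) &
      all (fun i => kmds_rank k al be i == Posz (nth 0 m i)) (iota 0 k)].

Ltac bcase := repeat (match goal with |- context[?x && ?y] =>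
   lazymatch x with true => fail | false => fail | _ => case: x end end;
   rewrite ?andbT ?andbF ?andTb ?andFb //).

Lemma kmds_rankS k a al b be i : kmds_rank k.+1 (a :: al) (b :: be) i.+1 = kmds_rank k al be i.
Proof. by []. Qed.
Lemma kmds_rank0 k a al b be : kmds_rank k.+2 (a :: al) (b :: be) 0 = (Posz (size a) - Posz (size b) - 1)%R.
Proof. by []. Qed.

Lemma shiftT a al be : all (fun i => all [eta leq (largest (nth [::] (a :: al) i))] (nth [::] al i) && all [eta leq (largest (nth [::] (a :: al) i))] (nth [::] be i)) (iota 0 (size al)) = all (fun i => all (fun x => thrc (largest a) al i <= x) (nth [::] al i) && all (fun x => thrc (largest a) al i <= x) (nth [::] be i)) (iota 0 (size al)).
Proof. by apply: eq_all => -[|i]. Qed.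

Lemma good_cons c D a b vs m ms : vs != [::] -> good c D ((a, b) :: vs) (m :: ms) =
  [&& is_partition a, is_partition b,
        all (fun x => c <= x) a, all (fun x => c <= x) b,
        all (fun x => x <= D) a, all (fun x => x <= D) b,
        a != [::], all (fun x => x <= largest a) b, strict_shifted a b,
                 size a == size b + m + 1 & good (largest a) D vs ms].
Proof. by case: vs. Qed.

Lemma all_cons' (T : Type) (P : pred T) x s : all P (x :: s) = P x && all P s.
Proof. by []. Qed.

Lemma KC_cons c D a al b be m0 m :
  KC c D (a::al) (b::be) (m0::m) =
  [&& is_partition a, is_partition b,
      (0 < size al) ==> ((a != [::]) && all (fun x => x <= largest a) b),
      all (fun x => c <= x) a, all (fun x => c <= x) b,
      all (fun x => x <= D) a,
      all (fun x => x <= D) b,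
      (0 < size al) ==> strict_shifted a b,
      kmds_rank (size al).+1 (a::al) (b::be) 0 == Posz m0 &
      KC (largest a) D al be m].
Proof.
rewrite {1}/KC; have -> : size (a::al) = (size al).+1 by [].
rewrite !all_iotaS shiftT !all_cons' /KC -!andbA.
by bcase.
Qed.

Lemma kmds_good_gen c D al be m :
  size be = size al -> size m = size al -> 0 < size al ->
  KC c D al be m = good c D (zip al be) m.
Proof.
elim: al c be m => [|a al IH] c [|b be] [|m0 m] // [Hb] [Hm] _.
rewrite KC_cons.
case: al IH Hb Hm => [|a' al] IH Hb Hm.
  case: be Hb => // _; case: m Hm => // _.
  rewrite /kmds_rank /= rk0 !andbT -!andbA.
  by bcase.
case: be Hb => [//|b' be] Hb.
have -> : zip [:: a, a' & al] [:: b, b' & be] = (a, b) :: zip (a' :: al) (b' :: be) by [].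
rewrite good_cons // -IH // kmds_rank0 rk1 !implyTb -!andbA.
by bcase.
Qed.


Definition Lk k n : seq (nat * (seq (seq nat) * seq (seq nat))) :=
  [seq (D, p) | D <- iota 0 n.+1,
                p <- [seq (al, be) | al <- seqs_len k (bseqs n), be <- seqs_len k (bseqs n)]].

Definition GP k m n (t : nat * (seq (seq nat) * seq (seq nat))) : bool :=
  let: (D, (al, be)) := t in
  [&& size al == k, size be == k, good 0 D (zip al be) m &
      sumn (map sumn al) + sumn (map sumn be) + D ^ 2 == n].

Lemma uniq_Lk k n : uniq (Lk k n).
Proof.
apply: allpairs_uniq; first exact: iota_uniq.
- have U := uniq_seqs_len k (uniq_bseqs n).
  apply: allpairs_uniq => //.
  by move=> [x1 s1] [x2 s2] _ _ /= [-> ->].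
- by move=> [x1 s1] [x2 s2] _ _ /= [-> ->].
Qed.

Lemma leq_sumn_mem (s : seq nat) x : x \in s -> x <= sumn s.
Proof.
elim: s => [|y s IH] //=; rewrite inE => /orP[/eqP ->|/IH H]; first exact: leq_addr.
by apply: leq_trans H _; apply: leq_addl.
Qed.

Lemma size_le_sumn (s : seq nat) : all (fun x => 0 < x) s -> size s <= sumn s.
Proof.
elim: s => [|y s IH] //= /andP[Hy Hs].
by rewrite -add1n; apply: leq_add => //; exact: IH.
Qed.

Lemma part_bseqs n a : is_partition a -> sumn a <= n -> a \in bseqs n.
Proof.
move=> /andP[_ Hp] Hn; rewrite mem_bseqs (leq_trans (size_le_sumn Hp) Hn) /=.
apply/allP => x Hx; rewrite (allP Hp x Hx) /=.
exact: leq_trans (leq_sumn_mem Hx) Hn.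
Qed.

Lemma seqs_bseqs n al : all is_partition al -> sumn (map sumn al) <= n ->
  al \in seqs_len (size al) (bseqs n).
Proof.
move=> Hp Hn; rewrite mem_seqs_len eqxx /=; apply/allP => a Ha.
apply: part_bseqs; first exact: (allP Hp).
apply: leq_trans Hn; apply: leq_sumn_mem; exact: map_f.
Qed.

Lemma memLk k n D al be : size al = k -> size be = k -> all is_partition al ->
  all is_partition be -> sumn (map sumn al) + sumn (map sumn be) + D ^ 2 = n ->
  (D, (al, be)) \in Lk k n.
Proof.
move=> Ha Hb Pa Pb Hs; apply/allpairsP; exists (D, (al, be)); split => //.
- rewrite [_.1]/= mem_iota add0n ltnS leq0n /= -Hs; apply: leq_trans (leq_addl _ _).
  by case: D {Hs} => // D; rewrite expnS expn1 leq_pmulr.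
- apply/allpairsP; exists (al, be); split => //.
  + rewrite -Ha; apply: seqs_bseqs => //; rewrite -Hs -addnA leq_addr //.
  + rewrite -Hb; apply: seqs_bseqs => //; rewrite -Hs -addnA; apply: leq_trans (leq_addl _ _).
    exact: leq_addr.
Qed.

Lemma inLk k n D al be : (D, (al, be)) \in Lk k n -> size al = k /\ size be = k.
Proof.
case/allpairsP => -[D' p] [_ /= Hp [_ Ep]]; subst p.
case/allpairsP: Hp => -[al' be'] [/= H1 H2 [-> ->]].
by move: H1 H2; rewrite !mem_seqs_len => /andP[/eqP -> _] /andP[/eqP -> _].
Qed.

Lemma thr0 (al be : seq (seq nat)) k :
  all (fun i => (0 < i) ==> (all (fun a => largest (nth [::] al i.-1) <= a) (nth [::] al i) &&
          all (fun b => largest (nth [::] al i.-1) <= b) (nth [::] be i))) (iota 0 k)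
  = all (fun i => all (fun a => thrc 0 al i <= a) (nth [::] al i) && all (fun b => thrc 0 al i <= b) (nth [::] be i)) (iota 0 k).
Proof.
apply: eq_all => -[|i] //=.
have T0 : forall s : seq nat, all (fun x => 0 <= x) s by move=> s; apply/allP.
by rewrite !T0.
Qed.

Lemma Dss_good k m n : 0 < k -> size m = k -> Dss k m n = count (GP k m n) (Lk k n).
Proof.
move=> k0 Hm; rewrite /Dss; apply: eq_in_count => -[D [al be]] Hin.
have [Ha Hb] := inLk Hin.
rewrite /GP Ha Hb !eqxx /= -kmds_good_gen ?Ha ?Hb //.
rewrite /is_ss_kmds /is_kmds /KC Ha Hb !eqxx thr0 /= -!andbA.
by bcase.
Qed.

From Stdlib Require Import Lia.

Fixpoint lastfail (P : pred nat) (n : nat) : nat :=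
  match n with 0 => 0 | n'.+1 => if P n' then lastfail P n' else n end.

Lemma lf_le (P : pred nat) n : lastfail P n <= n.
Proof. elim: n => //= n IH; case: (P n) => //; exact: leq_trans IH _. Qed.

Lemma lf_all (P : pred nat) n i : lastfail P n <= i < n -> P i.
Proof.
elim: n => [|n IH] /=; first by rewrite ltn0.
case Pn: (P n).
  move=> /andP[H1 H2]; case: (eqVneq i n) => [-> //|Hne]; apply: IH; rewrite H1 /=.
  by rewrite ltn_neqAle Hne -ltnS.
by move=> /andP[H1 H2]; have := leq_trans H1 H2; rewrite ltnn.
Qed.

Lemma lf_fail (P : pred nat) n : 0 < lastfail P n -> ~~ P (lastfail P n).-1.
Proof. elim: n => //= n IH; case Pn: (P n) => //= _; by rewrite Pn. Qed.

Lemma lf_uniq (P : pred nat) n u : u <= n -> (forall i, u <= i < n -> P i) -> (0 < u -> ~~ P u.-1) ->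
  lastfail P n = u.
Proof.
elim: n => [|n IH] Hu Hall Hf /=; first by case: u Hu {Hall Hf}.
case: (eqVneq u n.+1) => [Hun|Hne].
  by move: Hf; rewrite Hun /= => /(_ isT) /negbTE ->.
have Hun : u <= n by rewrite -ltnS ltn_neqAle Hne Hu.
rewrite Hall ?Hun ?ltnSn //; apply: IH => // i /andP[H1 H2]; apply: Hall; rewrite H1 /=.
exact: leqW.
Qed.

Ltac nlia := repeat match goal with H : context [addn _ _] |- _ => revert H | H : context [subn _ _] |- _ => revert H | H: context [muln _ _] |- _ => revert H end; rewrite -?plusE -?minusE -?multE; intros; lia.

Lemma sorted_nth_le s i j : sorted geq s -> i <= j -> nth 0 s j <= nth 0 s i.
Proof.
move=> Hs Hij; case: (ltnP j (size s)) => Hj; last by rewrite nth_default.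
have tr : transitive geq by move=> y x z /= H1 H2; exact: leq_trans H2 H1.
have := sorted_leq_nth tr (fun x => leqnn x) 0 Hs; apply => //.
  by rewrite inE (leq_ltn_trans Hij Hj).
Qed.

Lemma sorted_cat_geq y x : sorted geq y -> sorted geq x ->
  (forall a b, a \in y -> b \in x -> b <= a) -> sorted geq (y ++ x).
Proof.
case: y => [|y0 y'] //= Hy Hx H.
rewrite cat_path Hy /=; case: x Hx H => [|x0 x'] //= Hx H.
rewrite Hx andbT; apply: H; [exact: mem_last | exact: mem_head].
Qed.

Lemma all_take_drop (P : pred nat) n s : all P s -> all P (take n s) && all P (drop n s).
Proof. by rewrite -{1}(cat_take_drop n s) all_cat. Qed.

Lemma largest_nth s : largest s = nth 0 s 0.
Proof. by case: s. Qed.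

Lemma part_take_drop n s : is_partition s -> is_partition (take n s) && is_partition (drop n s).
Proof.
case/andP => Hs Hp; case/andP: (all_take_drop n Hp) => H1 H2.
by rewrite /is_partition take_sorted // drop_sorted // H1 H2.
Qed.

Lemma mem_le_largest s b : sorted geq s -> b \in s -> b <= largest s.
Proof.
move=> Hs /(nthP 0) [i Hi <-]; rewrite largest_nth; exact: sorted_nth_le.
Qed.

Definition Pspl (A B : seq nat) (m2 : nat) : pred nat := fun i => nth 0 B i < nth 0 A (i + m2).+1.
Definition spl_s A B m2 := lastfail (Pspl A B m2) (size B).

Lemma merge_ok c D x u y v m1 m2 :
  good c D [:: (x, u); (y, v)] [:: m1; m2] ->
  good c D [:: (y ++ x, v ++ u)] [:: m1 + m2 + 1] /\ spl_s (y ++ x) (v ++ u) m2 = size v.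
Proof.
rewrite /=.
move=> /andP[px /andP[pu /andP[cx /andP[cu /andP[dx /andP[du /andP[nx /andP[lu /andP[ss /andP[sx /andP[py /andP[pv /andP[cy /andP[cv /andP[dy /andP[dv sy]]]]]]]]]]]]]]]].
move/eqP: sx => sx; move/eqP: sy => sy.
have hx : c <= largest x.
  by move: nx cx; case: (x) => // x0 x' _ /andP[].
have sox : sorted geq x by case/andP: px.
split.
- rewrite !all_cat cx cu dx du dy dv /= !size_cat sx sy.
  case/andP: px => _ px; case/andP: pu => sou pu; case/andP: py => soy py; case/andP: pv => sov pv.
  rewrite /is_partition !all_cat px pu py pv !andbT.
  rewrite sorted_cat_geq //=; last first.
    move=> a b Ha Hb; apply: leq_trans (allP cy a Ha); exact: mem_le_largest.
  rewrite sorted_cat_geq //=; last first.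
    move=> a b Ha Hb; apply: leq_trans (allP lu b Hb) (allP cv a Ha).
  apply/andP; split.
    apply/allP => a Ha; exact: leq_trans hx (allP cy a Ha).
  apply/andP; split.
    apply/allP => a Ha; exact: leq_trans hx (allP cv a Ha).
  apply/eqP; nlia.
- rewrite /spl_s; apply: lf_uniq.
  + by rewrite size_cat leq_addr.
  + move=> i /andP[H1 H2]; rewrite /Pspl nth_cat (_ : i < size v = false); last by rewrite ltnNge H1.
    rewrite nth_cat.
    have -> : (i + m2).+1 < size y = false by apply/negbTE; rewrite -leqNgt sy; apply/leP; move/leP: H1; nlia.
    have -> : (i + m2).+1 - size y = (i - size v).+1 by rewrite sy; move/leP: H1; nlia.
    case/andP: ss => _ /allP; apply; rewrite mem_iota add0n leq0n /=.
    by move: H2; rewrite size_cat; move/leP: H1 => H1 /ltP H2; apply/ltP; nlia.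
  + move=> Hv; have Hlt : (size v).-1 < size v by rewrite prednK.
    rewrite /Pspl nth_cat Hlt -leqNgt nth_cat.
    have E : ((size v).-1 + m2).+1 = size y by rewrite sy -addSn prednK.
    rewrite E ltnn subnn.
    rewrite -largest_nth; apply: (allP cv); exact: mem_nth.
Qed.

Lemma ltn_take (T : Type) n (s : seq T) i : i < size (take n s) -> i < n.
Proof. rewrite size_take_min => H; exact: leq_trans H (geq_minl _ _). Qed.

Lemma split_ok c D A B m1 m2 : good c D [:: (A, B)] [:: m1 + m2 + 1] ->
  let s := spl_s A B m2 in
  good c D [:: (drop (s + m2) A, drop s B); (take (s + m2) A, take s B)] [:: m1; m2].
Proof.
rewrite /= => /andP[pA /andP[pB /andP[cA /andP[cB /andP[dA /andP[dB /eqP sAB]]]]]].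
have Hs : spl_s A B m2 <= size B by apply: lf_le.
set s := spl_s A B m2 in Hs *.
have soA : sorted geq A by case/andP: pA.
have soB : sorted geq B by case/andP: pB.
case/andP: (part_take_drop (s + m2) pA) => -> ->.
case/andP: (part_take_drop s pB) => -> ->.
case/andP: (all_take_drop (s + m2) cA) => _ ->.
case/andP: (all_take_drop s cB) => _ ->.
case/andP: (all_take_drop (s + m2) dA) => -> ->.
case/andP: (all_take_drop s dB) => -> ->.
have sxe : size (drop (s + m2) A) = size (drop s B) + m1 + 1.
  rewrite !size_drop sAB; move/leP: Hs => Hs; nlia.
have ssH : forall j, j < size (drop s B) -> nth 0 (drop s B) j < nth 0 (drop (s + m2) A) j.+1.
  move=> j Hj; rewrite !nth_drop.
  have := @lf_all (Pspl A B m2) (size B) (s + j).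
  rewrite /Pspl -/s leq_addr /= (_ : s + m2 + j.+1 = (s + j + m2).+1); last by nlia.
  apply; move: Hj; rewrite size_drop; move/leP: Hs => Hs /ltP Hj; apply/ltP; nlia.
have lx : largest (drop (s + m2) A) = nth 0 A (s + m2) by rewrite largest_nth nth_drop addn0.
rewrite /strict_shifted sxe addn1 /= eqxx -size_eq0 sxe addn1 /=.
apply/and5P; split.
- apply/allP => b /(nthP 0) [j Hj <-]; apply: ltnW; apply: leq_trans (ssH j Hj) _.
  rewrite largest_nth; apply: sorted_nth_le => //; exact: drop_sorted.
- rewrite ltnS leq_addr /=; apply/allP => j; rewrite mem_iota add0n => /andP[_ Hj]; exact: ssH.
- apply/allP => a /(nthP 0) [i Hi <-]; have Hi' := ltn_take Hi; rewrite lx nth_take //.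
  by apply: sorted_nth_le => //; apply: ltnW.
- apply/allP => b /(nthP 0) [i Hi <-]; have Hi' := ltn_take Hi; rewrite lx nth_take //.
  have s0 : 0 < s by apply: leq_ltn_trans Hi'.
  have := @lf_fail (Pspl A B m2) (size B) s0; rewrite -/s /Pspl -leqNgt.
  rewrite -addSn prednK // => H; apply: leq_trans H _.
  by apply: sorted_nth_le => //; rewrite -ltnS prednK.
- rewrite !size_takel //; rewrite sAB; move/leP: Hs => Hs; apply/leP; nlia.
Qed.


Lemma GP_mem k m n t : 0 < k -> size m = k -> GP k m n t -> t \in Lk k n.
Proof.
case: t => D [al be] k0 Hm /and4P[/eqP Ha /eqP Hb Hg /eqP Hs].
move: Hg; rewrite -kmds_good_gen ?Ha ?Hb // => /and3P[Pa Pb _].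
exact: memLk.
Qed.

Lemma ex_split2 (T : Type) k (s : seq T) : size s = k.+2 -> exists s0 x y, size s0 = k /\ s = s0 ++ [:: x; y].
Proof.
elim: k s => [|k IH] [|x s] //=.
  by case: s => [|y [|z t]] // _; exists [::], x, y.
case=> /IH [s0 [y [z [H1 ->]]]]; exists (x :: s0), y, z; by rewrite /= H1.
Qed.

Lemma ex_split1 (T : Type) k (s : seq T) : size s = k.+1 -> exists s0 x, size s0 = k /\ s = s0 ++ [:: x].
Proof.
elim: k s => [|k IH] [|x s] //=.
  by case: s => [|y t] // _; exists [::], x.
case=> /IH [s0 [y [H1 ->]]]; exists (x :: s0), y; by rewrite /= H1.
Qed.

Lemma nth_c2a (T : Type) (d : T) k s0 x y : size s0 = k -> nth d (s0 ++ [:: x; y]) k = x.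
Proof. by move=> <-; rewrite nth_cat ltnn subnn. Qed.
Lemma nth_c2b (T : Type) (d : T) k s0 x y : size s0 = k -> nth d (s0 ++ [:: x; y]) k.+1 = y.
Proof. by move=> <-; elim: s0. Qed.
Lemma nth_c1 (T : Type) (d : T) k s0 x : size s0 = k -> nth d (s0 ++ [:: x]) k = x.
Proof. by move=> <-; rewrite nth_cat ltnn subnn. Qed.

Definition mergeT k0 (t : nat * (seq (seq nat) * seq (seq nat))) :=
  let: (D, (al, be)) := t in
  (D, (take k0 al ++ [:: nth [::] al k0.+1 ++ nth [::] al k0],
       take k0 be ++ [:: nth [::] be k0.+1 ++ nth [::] be k0])).

Definition splitT k0 m2 (t : nat * (seq (seq nat) * seq (seq nat))) :=
  let: (D, (al, be)) := t in
  let A := nth [::] al k0 in let B := nth [::] be k0 in let s := spl_s A B m2 in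
  (D, (take k0 al ++ [:: drop (s + m2) A; take (s + m2) A],
       take k0 be ++ [:: drop s B; take s B])).

Lemma good2_size c D x u y v m1 m2 : good c D [:: (x, u); (y, v)] [:: m1; m2] -> size y = size v + m2.
Proof. by move=> /= /andP[_ /andP[_ /andP[_ /andP[_ /andP[_ /andP[_ /andP[_ /andP[_ /andP[_ /andP[_ /andP[_ /andP[_ /andP[_ /andP[_ /andP[_ /andP[_ /eqP]]]]]]]]]]]]]]]]. Qed.

Lemma sumn_cat' (s t : seq nat) : sumn (s ++ t) = sumn s + sumn t.
Proof. by elim: s => //= x s ->; rewrite addnA. Qed.

Lemma zip1 (a b : seq nat) : zip [:: a] [:: b] = [:: (a, b)].
Proof. by []. Qed.
Lemma zip2 (a b c d : seq nat) : zip [:: a; c] [:: b; d] = [:: (a, b); (c, d)].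
Proof. by []. Qed.

Lemma step_fwd k0 ms m1 m2 n t : size ms = k0 -> GP k0.+2 (ms ++ [:: m1; m2]) n t ->
  GP k0.+1 (ms ++ [:: m1 + m2 + 1]) n (mergeT k0 t) /\ splitT k0 m2 (mergeT k0 t) = t.
Proof.
case: t => D [al be] Hms /and4P[/eqP Ha /eqP Hb Hg /eqP Hsum].
have [al0 [x [y [Ha0 Eal]]]] := ex_split2 Ha.
have [be0 [u [v [Hb0 Ebe]]]] := ex_split2 Hb.
subst al be.
have Hz : size (zip al0 be0) = size ms by rewrite size_zip Ha0 Hb0 minnn.
move: Hg; rewrite zip_cat ?Ha0 ?Hb0 // good_cat // zip2 => /andP[Hpre H2].
have [Hm Hsp] := merge_ok H2.
have Hy := good2_size H2.
rewrite /mergeT !take_size_cat // (nth_c2a _ _ _ Ha0) (nth_c2b _ _ _ Ha0).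
rewrite (nth_c2a _ _ _ Hb0) (nth_c2b _ _ _ Hb0).
split.
- rewrite /GP !size_cat Ha0 Hb0 (addn1 k0) !eqxx /= zip_cat ?Ha0 ?Hb0 // good_cat // Hpre zip1 Hm /=.
  apply/eqP; rewrite -Hsum !map_cat !sumn_cat' /= !sumn_cat'; nlia.
- rewrite /splitT.
  rewrite !take_size_cat // (nth_c1 _ _ Ha0) (nth_c1 _ _ Hb0) Hsp -Hy.
  by rewrite take_size_cat // drop_size_cat // take_size_cat // drop_size_cat.
Qed.

Lemma step_bwd k0 ms m1 m2 n t : size ms = k0 -> GP k0.+1 (ms ++ [:: m1 + m2 + 1]) n t ->
  GP k0.+2 (ms ++ [:: m1; m2]) n (splitT k0 m2 t) /\ mergeT k0 (splitT k0 m2 t) = t.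
Proof.
case: t => D [al be] Hms /and4P[/eqP Ha /eqP Hb Hg /eqP Hsum].
have [al0 [A [Ha0 Eal]]] := ex_split1 Ha.
have [be0 [B [Hb0 Ebe]]] := ex_split1 Hb.
subst al be.
have Hz : size (zip al0 be0) = size ms by rewrite size_zip Ha0 Hb0 minnn.
move: Hg; rewrite zip_cat ?Ha0 ?Hb0 // good_cat // zip1 => /andP[Hpre H1].
have H2 := split_ok H1; cbv zeta in H2.
rewrite /splitT !take_size_cat // (nth_c1 _ _ Ha0) (nth_c1 _ _ Hb0).
split.
- rewrite /GP !size_cat Ha0 Hb0 !addn2 !eqxx /= zip_cat ?Ha0 ?Hb0 // good_cat // Hpre zip2 H2 /=.
  apply/eqP; rewrite -Hsum !map_cat !sumn_cat' /=.
  have EA : sumn A = sumn (take (spl_s A B m2 + m2) A) + sumn (drop (spl_s A B m2 + m2) A).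
    by rewrite -sumn_cat' cat_take_drop.
  have EB : sumn B = sumn (take (spl_s A B m2) B) + sumn (drop (spl_s A B m2) B).
    by rewrite -sumn_cat' cat_take_drop.
  rewrite EA EB; nlia.
- rewrite /mergeT !take_size_cat // (nth_c2a _ _ _ Ha0) (nth_c2b _ _ _ Ha0).
  by rewrite (nth_c2a _ _ _ Hb0) (nth_c2b _ _ _ Hb0) !cat_take_drop.
Qed.

Lemma Dss_step k0 ms m1 m2 n : size ms = k0 ->
  Dss k0.+2 (ms ++ [:: m1; m2]) n = Dss k0.+1 (ms ++ [:: m1 + m2 + 1]) n.
Proof.
move=> Hms.
have E1 : size (ms ++ [:: m1; m2]) = k0.+2 by rewrite size_cat Hms addn2.
have E2 : size (ms ++ [:: m1 + m2 + 1]) = k0.+1 by rewrite size_cat Hms (addn1 k0).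
rewrite (Dss_good n (ltn0Sn _) E1) (Dss_good n (ltn0Sn _) E2).
apply: (@count_bij _ _ _ _ _ _ (mergeT k0) (splitT k0 m2)).
- exact: uniq_Lk.
- exact: uniq_Lk.
- move=> t; exact: GP_mem.
- move=> t; exact: GP_mem.
- move=> t; exact: step_fwd Hms.
- move=> t; exact: step_bwd Hms.
Qed.


Definition cnts (L : nat) (s : seq nat) := [seq count (fun x => j < x) s | j <- iota 0 L].
Definition conjp (s : seq nat) := cnts (head 0 s) s.
Definition durf (l : seq nat) := find (fun i => nth 0 l i <= i) (iota 0 (size l)).
Definition arm (D : nat) (a : seq nat) := [seq D + count (fun x => j < x) a | j <- iota 0 D].

Lemma cnt_iota x L : count (fun j => j < x) (iota 0 L) = minn x L.
Proof.
elim: L => [|L IH]; first by rewrite minn0.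
rewrite -addn1 iotaD count_cat IH /= add0n addn0.
case: (ltnP L x) => h.
  have E2 : minn x (L + 1) = L + 1 by apply/minn_idPr; rewrite addn1.
  by rewrite E2.
have E2 : minn x (L + 1) = x by apply/minn_idPl; rewrite addn1; exact: leqW.
by rewrite E2 addn0.
Qed.

Lemma geq_trans : transitive geq.
Proof. by move=> y x z /= H1 H2; exact: leq_trans H2 H1. Qed.

Lemma cnt_nth s i j : sorted geq s -> (i < count (fun x => j < x) s) = (j < nth 0 s i).
Proof.
elim: s i => [|x s IH] i Hs /=; first by rewrite nth_nil.
have Hs' : sorted geq s := path_sorted Hs.
have allx : all (geq x) s := order_path_min geq_trans Hs.
case: (ltnP j x) => hj.
  rewrite add1n; case: i => [|i] //=; by rewrite ltnS IH.
have c0 : count (fun y => j < y) s = 0.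
  apply/eqP; rewrite -leqn0 leqNgt -has_count; apply/hasPn => y Hy.
  by rewrite -leqNgt (leq_trans _ hj) //; exact: (allP allx y Hy).
rewrite c0 ltn0.
apply/esym/negbTE; rewrite -leqNgt; apply: leq_trans _ hj.
have := @sorted_nth_le (x :: s) 0 i Hs (leq0n _); by [].
Qed.

Lemma nth_cnts s L j : j < L -> nth 0 (cnts L s) j = count (fun x => j < x) s.
Proof. by move=> H; rewrite (nth_map 0) ?size_iota // nth_iota. Qed.

Lemma count_cnts s L i : sorted geq s ->
  count (fun y => i < y) (cnts L s) = minn (nth 0 s i) L.
Proof.
move=> Hs; rewrite /cnts count_map -cnt_iota; apply: eq_count => j /=.
by rewrite cnt_nth.
Qed.

Lemma sumn_bool (P : pred nat) r : sumn [seq nat_of_bool (P j) | j <- r] = count P r.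
Proof. by elim: r => //= x r ->. Qed.

Lemma sumn_map_add (f g : nat -> nat) r :
  sumn [seq f j + g j | j <- r] = sumn [seq f j | j <- r] + sumn [seq g j | j <- r].
Proof. by elim: r => //= x r ->; rewrite addnACA. Qed.

Lemma sumn_cnts L s : all (fun x => x <= L) s -> sumn (cnts L s) = sumn s.
Proof.
elim: s => [|x s IH] /=.
  by rewrite /cnts; elim: (iota 0 L) => //= j r ->.
move=> /andP[hx hs]; rewrite /cnts /=.
rewrite (sumn_map_add (fun j => nat_of_bool (j < x)) (fun j => count (fun y => j < y) s)).
by rewrite sumn_bool cnt_iota (_ : minn x L = x) ?IH //; apply/minn_idPl.
Qed.

Lemma sumn_addc D (f : nat -> nat) r :
  sumn [seq D + f j | j <- r] = D * size r + sumn [seq f j | j <- r].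
Proof. elim: r => [|x r IH] /=; first by rewrite muln0. rewrite IH mulnS; nlia. Qed.

Lemma sumn_subc D s : all (fun x => D <= x) s ->
  sumn s = D * size s + sumn [seq x - D | x <- s].
Proof.
elim: s => [|x s IH] /=; first by rewrite muln0.
move=> /andP[hx hs]; rewrite IH // mulnS.
move/leP: hx; nlia.
Qed.

Lemma sorted_map_iota (f : nat -> nat) m L : (forall i, f i.+1 <= f i) ->
  sorted geq [seq f j | j <- iota m L].
Proof.
move=> H; elim: L m => [|L IH] m //=.
case: L IH => [|L] IH //=.
rewrite H /=; exact: (IH m.+1).
Qed.

Lemma sorted_cnts L s : sorted geq (cnts L s).
Proof.
apply: sorted_map_iota => i; apply: sub_count => x /=; exact: ltnW.
Qed.

Lemma find_eq (T : Type) (a : pred T) x0 s d :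
  (forall i, i < d -> ~~ a (nth x0 s i)) -> (d < size s -> a (nth x0 s d)) -> d <= size s ->
  find a s = d.
Proof.
elim: s d => [|x s IH] [|d] //= H1 H2 H3.
- by rewrite H2.
- rewrite (negbTE (H1 0 isT)); congr S; apply: IH => //.
  by move=> i Hi; apply: (H1 i.+1).
Qed.

Lemma durf_le l : durf l <= size l.
Proof. by rewrite /durf; apply: leq_trans (find_size _ _) _; rewrite size_iota. Qed.

Lemma durf_lt l i : i < durf l -> i < nth 0 l i.
Proof.
move=> H; have Hi : i < size l := leq_trans H (durf_le l).
have := before_find 0 H; rewrite nth_iota // add0n => /negbT; by rewrite -ltnNge.
Qed.

Lemma durf_at l : nth 0 l (durf l) <= durf l.
Proof.
case: (ltnP (durf l) (size l)) => H; last by rewrite nth_default.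
have Hh : has (fun i => nth 0 l i <= i) (iota 0 (size l)).
  by rewrite has_find size_iota.
by have := nth_find 0 Hh; rewrite nth_iota // -/(durf l).
Qed.

Lemma durf_ge l i : sorted geq l -> i < durf l -> durf l <= nth 0 l i.
Proof.
move=> Hs H; have D0 : 0 < durf l by apply: leq_ltn_trans H.
have Hp : (durf l).-1 < durf l by rewrite ltn_predL.
have := durf_lt Hp.
rewrite prednK // => H1; apply: leq_trans H1 _; apply: sorted_nth_le => //.
by rewrite -ltnS prednK.
Qed.

Lemma durf_le2 l i : sorted geq l -> durf l <= i -> nth 0 l i <= durf l.
Proof. move=> Hs H; apply: leq_trans (durf_at l); exact: sorted_nth_le. Qed.


Definition fwd1 (t : nat * (seq (seq nat) * seq (seq nat))) : seq nat :=
  let: (D, (al, be)) := t in arm D (head [::] al) ++ head [::] be.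
Definition bwd1 (l : seq nat) : nat * (seq (seq nat) * seq (seq nat)) :=
  let D := durf l in (D, ([:: conjp [seq x - D | x <- take D l]], [:: drop D l])).
Definition NP R n (s : seq nat) := [&& is_partition s, sumn s == n & prank s == Posz R].

Lemma pos_le0 s : all (fun x => 0 < x) s -> all (fun x => x <= 0) s -> s = [::].
Proof. case: s => //= x s /andP[h _] /andP[h' _]; by move: h; rewrite ltnNge h'. Qed.

Lemma all_nth_le D s i : all (fun x => x <= D) s -> nth 0 s i <= D.
Proof.
move=> H; case: (ltnP i (size s)) => Hi; last by rewrite nth_default.
by apply: (allP H); apply: mem_nth.
Qed.

Lemma count_pos s : all (fun x => 0 < x) s -> count (fun x => 0 < x) s = size s.
Proof. by rewrite all_count => /eqP. Qed.

Lemma size_arm D a : size (arm D a) = D.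
Proof. by rewrite size_map size_iota. Qed.

Lemma nth_arm D a j : j < D -> nth 0 (arm D a) j = D + count (fun x => j < x) a.
Proof. by move=> H; rewrite (nth_map 0) ?size_iota // nth_iota. Qed.

Lemma fwd_ok R n t : GP 1 [:: R] n t -> NP R n (fwd1 t) /\ bwd1 (fwd1 t) = t.
Proof.
case: t => D [al be] /and4P[/eqP Ha /eqP Hb Hg /eqP Hs].
case: al Ha Hg Hs => [|a [|]] // _; case: be Hb => [|b [|]] // _ Hg Hs.
move: Hg => /= /andP[pa /andP[pb /andP[_ /andP[_ /andP[da /andP[db /eqP sab]]]]]].
move: Hs => /=; rewrite !addn0 => Hs.
have soa : sorted geq a by case/andP: pa.
have posa : all (fun x => 0 < x) a by case/andP: pa.
have sob : sorted geq b by case/andP: pb.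
have posb : all (fun x => 0 < x) b by case/andP: pb.
have armD : forall y, y \in arm D a -> D <= y.
  by move=> y /mapP [j _ ->]; apply: leq_addr.
have armP : forall y, y \in arm D a -> 0 < y.
  move=> y /mapP [j Hj ->]; move: Hj; rewrite mem_iota add0n => /andP[_ Hj].
  apply: ltn_addr; exact: leq_ltn_trans (leq0n j) Hj.
have cA : conjp (cnts D a) = a.
  have Hh : head 0 (cnts D a) = size a.
    case: (posnP D) => [D0|D0]; first by move: da; rewrite D0 => da; rewrite (pos_le0 posa da).
    rewrite -nth0 nth_cnts //; exact: count_pos.
  rewrite /conjp Hh; apply: (@eq_from_nth _ 0); first by rewrite size_map size_iota.
  move=> j; rewrite size_map size_iota => Hj; rewrite nth_cnts // count_cnts //.
  by apply/minn_idPl; apply: all_nth_le.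
have Hdurf : durf (arm D a ++ b) = D.
  rewrite /durf; apply: (@find_eq _ _ 0).
  - move=> i Hi; rewrite nth_iota; last by apply: leq_trans Hi _; rewrite size_cat size_arm leq_addr.
    by rewrite add0n nth_cat size_arm Hi nth_arm // -ltnNge ltn_addr.
  - rewrite size_iota size_cat size_arm => Hi; rewrite nth_iota // add0n nth_cat size_arm ltnn subnn.
    exact: all_nth_le.
  - by rewrite size_iota size_cat size_arm leq_addr.
split.
- rewrite /NP /=; apply/and3P; split.
  + rewrite /is_partition all_cat posb andbT; apply/andP; split.
      apply: sorted_cat_geq => //.
        apply: sorted_map_iota => i; rewrite leq_add2l; apply: sub_count => x /=; exact: ltnW.
      move=> y z Hy Hz; apply: leq_trans (armD y Hy); exact: (allP db).
    by apply/allP => y Hy; apply: armP.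
  + rewrite sumn_cat' /arm sumn_addc size_iota -/(cnts D a) sumn_cnts // -Hs -mulnn; apply/eqP; nlia.
  + case: (posnP D) => [D0|D0].
      subst D; have a0 := pos_le0 posa da; have b0 := pos_le0 posb db; subst a b.
      by move: sab; rewrite add0n => /= <-.
    have [D' ED] : exists D', D = D'.+1 by exists D.-1; rewrite prednK.
    rewrite /prank rk0 size_cat size_arm /largest /arm ED /= count_pos // sab; apply/eqP; nlia.
- rewrite /bwd1 /fwd1 /= Hdurf take_size_cat ?size_arm // drop_size_cat ?size_arm //.
  rewrite /arm -map_comp (@eq_map _ _ _ (fun j => count (fun x => j < x) a)); last first.
    by move=> j /=; rewrite addKn.
  by rewrite -/(cnts D a) cA.
Qed.

Lemma bwd_ok R n l : NP R n l -> GP 1 [:: R] n (bwd1 l) /\ fwd1 (bwd1 l) = l.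
Proof.
case/and3P => pl /eqP Hs /eqP Hr.
have sol : sorted geq l by case/andP: pl.
have posl : all (fun x => 0 < x) l by case/andP: pl.
have HD : durf l <= size l := durf_le l.
rewrite /bwd1; set D := durf l in HD *.
set mu := [seq x - D | x <- take D l].
have stk : size (take D l) = D by rewrite size_takel.
have smu : size mu = D by rewrite size_map.
have tkD : forall y, y \in take D l -> D <= y.
  move=> y /(nthP 0) [i Hi <-]; rewrite stk in Hi; rewrite nth_take //; exact: durf_ge.
have nmu : forall j, j < D -> nth 0 mu j = nth 0 l j - D.
  by move=> j Hj; rewrite (nth_map 0) ?stk // nth_take.
have somu : sorted geq mu.
  rewrite sorted_map; apply: (@sub_sorted _ geq); last exact: take_sorted.
  by move=> x y /= H; apply: leq_sub2r.
have mule : all (fun x => x <= head 0 mu) mu.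
  by apply/allP => x Hx; have := mem_le_largest somu Hx.
have cnt_c : forall j, count (fun y => j < y) (conjp mu) = nth 0 mu j.
  move=> j; rewrite /conjp count_cnts //; apply/minn_idPl.
  rewrite -nth0; exact: sorted_nth_le.
have armE : arm D (conjp mu) = take D l.
  apply: (@eq_from_nth _ 0); first by rewrite size_arm stk.
  move=> j; rewrite size_arm => Hj; rewrite nth_arm // cnt_c nmu // nth_take //.
  by rewrite subnKC //; apply: durf_ge.
split; last by rewrite /fwd1 /= armE cat_take_drop.
rewrite /GP /=.

have dle : all (fun x => x <= D) (drop D l).
  apply/allP => y /(nthP 0) [i Hi <-]; rewrite nth_drop; apply: durf_le2 => //; exact: leq_addr.
have pc : is_partition (conjp mu).
  rewrite /is_partition sorted_cnts /=; apply/allP => y /mapP [j Hj ->].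
  move: Hj; rewrite mem_iota add0n => /andP[_ Hj].
  rewrite -has_count; apply/hasP; exists (head 0 mu) => //.
  by case: (mu) Hj => // x s _; exact: mem_head.
case/andP: (part_take_drop D pl) => _ pd.
have T0 : forall s : seq nat, all (fun x => 0 <= x) s by move=> s; apply/allP.
rewrite pc pd !T0 dle /=.
have cle : all (fun x => x <= D) (conjp mu).
  apply/allP => y /mapP [j _ ->]; rewrite -smu; exact: count_size.
rewrite cle /= !addn0.
have sc : sumn (conjp mu) = sumn mu by rewrite /conjp sumn_cnts.
have st : sumn (take D l) = D * D + sumn mu.
  by rewrite (@sumn_subc D) ?stk //; apply/allP.
apply/andP; split; last first.
  apply/eqP; rewrite sc -Hs -{2}(cat_take_drop D l) sumn_cat' st -mulnn; nlia.
rewrite /conjp size_map size_iota size_drop.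
case: (posnP D) => [D0|D0].
  have l0 : l = [::].
    move: (durf_at l) posl; rewrite -/D D0; case: (l) => // x l' /= hx /andP[hx' _].
    by move: hx'; rewrite ltnNge hx.
  have mu0 : mu = [::] by apply: size0nil; rewrite smu D0.
  move: Hr; rewrite mu0 l0 /prank /largest /= subrr => -[<-].
  by rewrite D0.
have Hr' : largest l = size l + R by move: Hr; rewrite /prank => /eqP; rewrite rk0 => /eqP.
rewrite -nth0 nmu // -largest_nth Hr'.
apply/eqP; move/leP: HD => HD'; nlia.
Qed.

Lemma Dss1 R n : Dss 1 [:: R] n = Nrank (Posz R) n.
Proof.
rewrite (@Dss_good 1 [:: R] n (ltn0Sn 0) (erefl 1)) /Nrank.
apply: (@count_bij _ _ _ _ _ _ fwd1 bwd1).
- exact: uniq_Lk.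
- exact: uniq_bseqs.
- move=> t; exact: GP_mem.
- move=> s /and3P[ps /eqP sn _]; apply: part_bseqs => //; by rewrite sn.
- move=> t Ht; exact: fwd_ok.
- move=> s Hs; exact: bwd_ok.
Qed.


Lemma Dss_all k : forall m n, size m = k.+1 -> Dss k.+1 m n = Nrank (Posz (sumn m + k)) n.
Proof.
elim: k => [|k IH] m n Hm.
  case: m Hm => [|R [|]] // _; rewrite Dss1; congr (Nrank (Posz _) n); by rewrite /= !addn0.
have [ms [m1 [m2 [Hms ->]]]] := ex_split2 Hm.
rewrite Dss_step // IH; last by rewrite size_cat Hms /= (addn1 k).
congr (Nrank (Posz _) n); rewrite !sumn_cat' /=; nlia.
Qed.

Unset Implicit Arguments.

Theorem mainTheorem3 (k n : nat) (m : seq nat) :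
  0 < k -> size m = k ->
  Dss k m n = Nrank (Posz (sumn m + k - 1)) n.
Proof.
case: k => [//|k] _ Hm.
by rewrite Dss_all // addnS subn1.
Qed.
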